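(* Let $G$ be a finite, connected, simple, bridgeless, triangle-free cubic graph. Then the reduced order two line graph $\mathfrak{L}_2(G)$ is $4$-regular and connected.
   Context: For a simple graph $H$, the line graph $\mathcal{L}(H)$ has the edges of $H$ as vertices, two of them adjacent iff they share an endpoint. For every triangle $T$ (3-cycle) of $\mathcal{L}(G)$, its three edges are pairwise adjacent in $\mathcal{L}(\mathcal{L}(G))$ and form a triangle $\mathcal{L}(T)$ there; let $\mathcal{T}$ be the set of all triangles $\mathcal{L}(T)$, $T$ ranging over triangles of $\mathcal{L}(G)$. The reduced order two line graph $\mathfrak{L}_2(G)$ is the graph with the same vertex set as $\mathcal{L}(\mathcal{L}(G))$ and whose edges are the edges of $\mathcal{L}(\mathcal{L}(G))$ not belonging to any triangle in $\mathcal{T}$. *)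

(* Defs.v *)
From mathcomp Require Import all_boot.
Set Implicit Arguments. Unset Strict Implicit. Unset Printing Implicit Defensive.

Definition simple_graph (T : finType) (e : rel T) := symmetric e /\ irreflexive e.

Definition edges (T : finType) (e : rel T) : {set {set T}} :=
  [set A | [exists x, exists y, e x y && (A == [set x; y])]].

(* Line graph, as a relation on {set T}; its vertex set is [edges e]
   (all other elements of {set T} are isolated and are NOT vertices). *)
Definition lineG (T : finType) (e : rel T) : rel {set T} :=
  fun A B => [&& A \in edges e, B \in edges e, A != B & ~~ [disjoint A & B]].

Definition cubic (T : finType) (e : rel T) := forall x : T, #|[set y | e x y]| = 3.

Definition gconnected (T : finType) (e : rel T) := forall x y : T, connect e x y.

Definition triangle_free (T : finType) (e : rel T) :=
  forall x y z : T, ~~ [&& e x y, e y z & e z x].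

Definition edge_del (T : finType) (e : rel T) (x y : T) : rel T :=
  fun u v => e u v && ([set u; v] != [set x; y]).

Definition bridgeless (T : finType) (e : rel T) :=
  forall x y : T, e x y -> connect (edge_del e x y) x y.

(* Triangles of L(G): three distinct pairwise adjacent vertices A,B,C of L(G).
   L(T) is the triangle of L(L(G)) with vertices {A,B},{B,C},{A,C}. *)
Definition in_LT_triangle (T : finType) (e : rel T) (X Y : {set {set T}}) :=
  [exists A : {set T}, exists B : {set T}, exists C : {set T},
    [&& lineG e A B, lineG e B C, lineG e A C,
        X \in [:: [set A; B]; [set B; C]; [set A; C]] &
        Y \in [:: [set A; B]; [set B; C]; [set A; C]]]].

(* The reduced order two line graph, as a relation on {set {set T}};
   its vertex set is that of L(L(G)), namely [edges (lineG e)]. *)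
Definition redL2 (T : finType) (e : rel T) : rel {set {set T}} :=
  fun X Y => lineG (lineG e) X Y && ~~ in_LT_triangle e X Y.

Definition regular_on (U : finType) (V : {set U}) (r : rel U) (k : nat) :=
  forall X, X \in V -> #|[set Y | r X Y]| = k.

Definition connected_on (U : finType) (V : {set U}) (r : rel U) :=
  forall X Y, X \in V -> Y \in V -> connect r X Y.

(* Main.v *)
Require Import Defs.
From mathcomp Require Import all_boot.
Set Implicit Arguments. Unset Strict Implicit. Unset Printing Implicit Defensive.

Section Gen.
Variable U : finType.

Lemma meetI (A B : {set U}) x : x \in A -> x \in B -> ~~ [disjoint A & B].
Proof. by move=> xA xB; apply/negP => /disjointFr /(_ xA); rewrite xB. Qed.

Lemma meetE (A B : {set U}) : ~~ [disjoint A & B] -> exists x, x \in A /\ x \in B.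
Proof. by rewrite -setI_eq0 => /set0Pn [x]; rewrite inE => /andP [] ? ?; exists x. Qed.

Lemma neq_by (A B : {set U}) x : x \in A -> x \notin B -> A != B.
Proof. by move=> xA xB; apply/eqP => E; move: xB; rewrite -E xA. Qed.

Lemma edgeI (r : rel U) x y : r x y -> [set x; y] \in edges r.
Proof. by move=> rxy; rewrite inE; apply/existsP; exists x; apply/existsP; exists y; rewrite rxy eqxx. Qed.

Lemma edge_at (r : rel U) (A : {set U}) v : symmetric r -> A \in edges r -> v \in A ->
  exists u, r v u /\ A = [set v; u].
Proof.
move=> sr; rewrite inE => /existsP [x /existsP [y /andP [rxy /eqP ->]]].
rewrite in_set2 => /orP [] /eqP ->; first by exists y.
by exists x; rewrite sr setUC.
Qed.

Lemma lineG_sym (r : rel U) : symmetric (lineG r).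
Proof. by move=> A B; rewrite /lineG eq_sym disjoint_sym; case: (A \in _); case: (B \in _). Qed.

Lemma connect_ind (r : rel U) (P : U -> Prop) x y :
  connect r x y -> P x -> (forall a b, P a -> r a b -> P b) -> P y.
Proof.
move/connectP => [p pth ->] Px H; elim: p x pth Px => [|z p IH] x //=.
by move=> /andP [rxz pth] Px; apply: (IH z pth); apply: H rxz.
Qed.
End Gen.
Section Graph.
Variables (T : finType) (e : rel T).
Hypotheses (esym : symmetric e) (eirr : irreflexive e) (tf : triangle_free e) (cub : cubic e).

Lemma eneq x y : e x y -> x != y.
Proof. by move=> exy; apply/eqP => E; move: exy; rewrite E eirr. Qed.

Lemma tri x y z : e x y -> e y z -> e z x -> False.
Proof. by move=> h1 h2 h3; move: (tf x y z); rewrite h1 h2 h3. Qed.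

Lemma cardN1 x y : e x y -> #|[set z | e x z] :\ y| = 2.
Proof. move=> exy; have := cardsD1 y [set z | e x z]; rewrite cub inE exy => H. by apply/eqP; rewrite -(eqn_add2l 1) -H. Qed.

Lemma other_nb x y : e x y -> exists z, e x z /\ z != y.
Proof.
move=> exy; have : 0 < #|[set z | e x z] :\ y| by rewrite cardN1.
by rewrite card_gt0 => /set0Pn [z]; rewrite !inE => /andP [] ? ?; exists z.
Qed.

Lemma side u v C : e u v -> lineG e [set u; v] C ->
  (exists c, [/\ e u c, c != v & C = [set u; c]]) \/
  (exists c, [/\ e v c, c != u & C = [set v; c]]).
Proof.
move=> euv /and4P [_ CE AC /meetE [z [zA zC]]].
have [c [ezc Cd]] := edge_at esym CE zC.
move: zA; rewrite in_set2 => /orP [] /eqP Ez; subst z.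
- left; exists c; split => //; apply/eqP => cv; subst c; by rewrite Cd eqxx in AC.
- right; exists c; split => //; apply/eqP => cu; subst c; by rewrite Cd setUC eqxx in AC.
Qed.

Lemma TRI X Y P Q : in_LT_triangle e X Y -> P \in X -> Q \in Y -> P = Q \/ ~~ [disjoint P & Q].
Proof.
move=> /existsP [A /existsP [B /existsP [C /and5P [hAB hBC hAC hX hY]]]].
have mem3 : forall Z R, Z \in [:: [set A; B]; [set B; C]; [set A; C]] -> R \in Z ->
   [\/ R = A, R = B | R = C].
  move=> Z R; rewrite !inE => /or3P [] /eqP ->; rewrite in_set2 => /orP [] /eqP ->; by [constructor 1|constructor 2|constructor 3].
have mAB := and4P hAB; have mBC := and4P hBC; have mAC := and4P hAC.
case: mAB => _ _ _ dAB; case: mBC => _ _ _ dBC; case: mAC => _ _ _ dAC.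
move=> PX QY; case: (mem3 _ _ hX PX) => ->; case: (mem3 _ _ hY QY) => ->;
  rewrite ?eqxx; try by left.
all: right; rewrite // disjoint_sym //.
Qed.

Lemma redL2_sym : symmetric (redL2 e).
Proof.
move=> X Y; rewrite /redL2 lineG_sym; congr (_ && ~~ _).
apply/existsP/existsP => [] [A /existsP [B /existsP [C /and5P [h1 h2 h3 h4 h5]]]];
 exists A; apply/existsP; exists B; apply/existsP; exists C; by rewrite h1 h2 h3 h4 h5.
Qed.

Lemma K u v b d : e u v -> e u b -> b != v -> e v d -> d != u ->
  redL2 e [set [set u; v]; [set u; b]] [set [set u; v]; [set v; d]].
Proof.
move=> euv eub bv evd du.
have uv := eneq euv; have ub := eneq eub; have vd := eneq evd.
have bd : b != d.
  apply/eqP => E; subst d; apply: (tri (z:=v) eub); by rewrite esym.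
have AP : lineG e [set u; v] [set u; b].
  apply/and4P; split; [exact: edgeI | exact: edgeI | | exact: (meetI (x:=u)) (set21 _ _) (set21 _ _)].
  by apply: (neq_by (x:=v)); rewrite ?set22 // in_set2 negb_or eq_sym uv eq_sym.
have AQ : lineG e [set u; v] [set v; d].
  apply/and4P; split; [exact: edgeI | exact: edgeI | | exact: (meetI (x:=v)) (set22 _ _) (set21 _ _)].
  by apply: (neq_by (x:=u)); rewrite ?set21 // in_set2 negb_or uv eq_sym du.
have PQ : [set u; b] != [set v; d].
  by apply: (neq_by (x:=u)); rewrite ?set21 // in_set2 negb_or uv eq_sym du.
apply/andP; split.
  apply/and4P; split; [exact: edgeI | exact: edgeI | | exact: (meetI (x:=[set u; v])) (set21 _ _) (set21 _ _)].
  apply: (neq_by (x:=[set u; b])); rewrite ?set22 // in_set2 negb_or PQ andbT.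
  by move: AP => /and4P [_ _ ? _]; rewrite eq_sym.
apply/negP => Ht; case: (TRI Ht (set22 [set u; v] [set u; b]) (set22 [set u; v] [set v; d])).
  by move=> /eqP; rewrite (negPf PQ).
move=> /meetE [z []]; rewrite !in_set2 => /orP [] /eqP -> /orP [] /eqP E.
- by rewrite E eqxx in uv.
- by rewrite E eqxx in du.
- by rewrite E eqxx in bv.
- by rewrite E eqxx in bd.
Qed.
End Graph.
Section Graph2.
Variables (T : finType) (e : rel T).
Hypotheses (esym : symmetric e) (eirr : irreflexive e) (tf : triangle_free e) (cub : cubic e).

Lemma E_elim (U : finType) (r : rel U) A : A \in edges r -> exists x y, r x y /\ A = [set x; y].
Proof. by rewrite inE => /existsP [x /existsP [y /andP [rxy /eqP ->]]]; exists x, y. Qed.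

Lemma lineG_at x y z : e x y -> e x z -> y != z -> lineG e [set x; y] [set x; z].
Proof.
move=> exy exz yz; apply/and4P; split; [exact: edgeI | exact: edgeI | |
  exact: (meetI (x:=x)) (set21 _ _) (set21 _ _)].
apply: (neq_by (x:=y)); rewrite ?set22 // in_set2 negb_or yz andbT.
by rewrite eq_sym; apply: eneq.
Qed.

Lemma half u v w Y : e v u -> e v w -> u != w ->
  redL2 e [set [set v; u]; [set v; w]] Y -> [set v; u] \in Y ->
  Y \in [set [set [set v; u]; [set u; c]] | c in [set z | e u z] :\ v].
Proof.
move=> evu evw uw /andP [/and4P [_ YE XY _] Hn] AY.
have [C [AC EY]] := edge_at (@lineG_sym _ e) YE AY; subst Y.
have evu' : e u v by rewrite esym.
have AC' : lineG e [set u; v] C by rewrite (setUC [set u] [set v]).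
case: (side esym evu' AC') => [] [c [euc cv EC]]; subst C.
  by apply/imsetP; exists c; rewrite // !inE cv euc.
case: (eqVneq c w) => [E | cw].
  by subst c; rewrite eqxx in XY.
exfalso; move/negP: Hn; apply; apply/existsP; exists [set v; u].
apply/existsP; exists [set v; w]; apply/existsP; exists [set v; c].
have wc : w != c by rewrite eq_sym.
have uc : u != c by rewrite eq_sym.
by rewrite (lineG_at evu evw uw) (lineG_at evw euc wc) (lineG_at evu euc uc) !inE !eqxx /= ?orbT.
Qed.
End Graph2.
Section Graph3.
Variables (T : finType) (e : rel T).
Hypotheses (esym : symmetric e) (eirr : irreflexive e) (tf : triangle_free e) (cub : cubic e).

Lemma inj_f x y : e x y ->
  {in [set z | e x z] :\ y &, injective (fun c => [set [set y; x]; [set x; c]])}.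
Proof.
move=> exy c1 c2; rewrite !inE => /andP [c1y exc1] /andP [c2y exc2] E.
have : [set x; c1] \in [set [set y; x]; [set x; c2]] by rewrite -E set22.
rewrite in_set2 => /orP [] /eqP E2.
  have : c1 \in [set y; x] by rewrite -E2 set22.
  rewrite in_set2 => /orP [] /eqP E3; first by rewrite E3 eqxx in c1y.
  by rewrite E3 eirr in exc1.
have : c1 \in [set x; c2] by rewrite -E2 set22.
rewrite in_set2 => /orP [] /eqP // E3.
by rewrite E3 eirr in exc1.
Qed.

Lemma degree X : X \in edges (lineG e) -> #|[set Y | redL2 e X Y]| = 4.
Proof.
move=> /E_elim [A [B [AB ->]]].
have AB' := AB; move/and4P: AB' => [AE BE AnB /meetE [v [vA vB]]].
have [u [evu EA]] := edge_at esym AE vA.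
have [w [evw EB]] := edge_at esym BE vB.
subst A B.
have uw : u != w by apply: contraNneq AnB => ->.
have euv : e u v by rewrite esym.
have ewv : e w v by rewrite esym.
set F1 := [set [set [set v; u]; [set u; c]] | c in [set z | e u z] :\ v].
set F2 := [set [set [set v; w]; [set w; c]] | c in [set z | e w z] :\ v].
have XC : [set [set v; u]; [set v; w]] = [set [set v; w]; [set v; u]] by rewrite setUC.
have -> : [set Y | redL2 e [set [set v; u]; [set v; w]] Y] = F1 :|: F2.
  apply/setP => Y; rewrite inE in_setU; apply/idP/idP.
    move=> H; have H' := H; move/andP: H' => [/and4P [_ _ _ /meetE [P [PX PY]]] _].
    move: PX; rewrite in_set2 => /orP [] /eqP EP; subst P.
      by apply/orP; left; apply: (half esym eirr evu evw uw H PY).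
    rewrite XC in H.
    by apply/orP; right; apply: (half esym eirr evw evu _ H PY); rewrite eq_sym.
  move=> /orP [] /imsetP [c]; rewrite !inE => /andP [cv euc] ->.
    by apply: K => //; rewrite eq_sym.
  rewrite XC; apply: K => //; by rewrite eq_sym.
rewrite cardsU.
have -> : F1 :&: F2 = set0.
  apply/setP => Y; rewrite !inE; apply/negP => /andP [/imsetP [c1 _ E1] /imsetP [c2]].
  rewrite !inE => /andP [c2v ewc2] E2.
  have : [set v; u] \in Y by rewrite E1 set21.
  rewrite E2 in_set2 => /orP [] /eqP E3.
    by rewrite E3 eqxx in AnB.
  have : v \in [set w; c2] by rewrite -E3 set21.
  rewrite in_set2 => /orP [] /eqP E4; first by rewrite E4 eirr in evw.
  by rewrite E4 eqxx in c2v.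
rewrite cards0 subn0 /F1 /F2 !card_in_imset ?cardN1 //; exact: inj_f.
Qed.
End Graph3.
Section Graph4.
Variables (T : finType) (e : rel T).
Hypotheses (esym : symmetric e) (eirr : irreflexive e) (tf : triangle_free e) (cub : cubic e).

Lemma L1' u v b C : e u v -> e u b -> b != v -> lineG e [set u; v] C ->
  connect (redL2 e) [set [set u; v]; [set u; b]] [set [set u; v]; C].
Proof.
move=> euv eub bv AC.
case: (side esym euv AC) => [] [c [euc cv ->]].
  have evu : e v u by rewrite esym.
  have [d [evd du]] := other_nb cub evu.
  apply: (connect_trans (y := [set [set u; v]; [set v; d]])).
    by apply: connect1; apply: K.
  by apply: connect1; rewrite redL2_sym; apply: K.
by apply: connect1; apply: K.
Qed.

Lemma L1 X Y A : X \in edges (lineG e) -> Y \in edges (lineG e) -> A \in X -> A \in Y ->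
  connect (redL2 e) X Y.
Proof.
move=> XE YE AX AY.
have [B [AB ->]] := edge_at (@lineG_sym _ e) XE AX.
have [C [AC ->]] := edge_at (@lineG_sym _ e) YE AY.
have AE : A \in edges e by case/and4P: AB.
have [x [y [exy EA]]] := E_elim AE; subst A.
case: (side esym exy AB) => [] [b [exb bv EB]]; subst B.
  exact: L1'.
have eyx : e y x by rewrite esym.
rewrite (setUC [set x] [set y]) in AC *.
exact: L1'.
Qed.

Lemma L2 X Y A B : X \in edges (lineG e) -> Y \in edges (lineG e) -> A \in X -> B \in Y ->
  A = B \/ ~~ [disjoint A & B] -> connect (redL2 e) X Y.
Proof.
move=> XE YE AX BY [E|dAB]; first by subst B; exact: (L1 XE YE AX).
case: (eqVneq A B) => [E|AnB]; first by subst B; exact: (L1 XE YE AX).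
have [A' [AA' _]] := edge_at (@lineG_sym _ e) XE AX.
have [B' [BB' _]] := edge_at (@lineG_sym _ e) YE BY.
have AE : A \in edges e by case/and4P: AA'.
have BE : B \in edges e by case/and4P: BB'.
have ZE : [set A; B] \in edges (lineG e) by apply: edgeI; apply/and4P; split.
apply: (connect_trans (y := [set A; B])).
  exact: (L1 XE ZE AX (set21 _ _)).
exact: (L1 ZE YE (set22 _ _) BY).
Qed.
End Graph4.

Theorem proposition2p1 (T : finType) (e : rel T) :
  simple_graph e -> gconnected e -> bridgeless e -> triangle_free e -> cubic e ->
  regular_on (edges (lineG e)) (redL2 e) 4 /\
  connected_on (edges (lineG e)) (redL2 e).
Proof.
move=> [esym eirr] gc _ tf cub; split.
  by move=> X XE; apply: degree.
move=> X Y XE YE.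
have [P [Q [PQ EX]]] := E_elim XE.
have PE : P \in edges e by case/and4P: PQ.
have [z0 [z1 [ez0 EP]]] := E_elim PE.
have PX : P \in X by rewrite EX set21.
pose Qz z := forall Y, Y \in edges (lineG e) -> forall A, A \in Y -> z \in A ->
  connect (redL2 e) X Y.
have Q0 : Qz z0.
  move=> Y' Y'E A AY' zA; apply: (L2 esym eirr tf cub XE Y'E PX AY'); right.
  by apply: (meetI (x:=z0)) => //; rewrite EP set21.
have step : forall a b, Qz a -> e a b -> Qz b.
  move=> a b Qa eab Y' Y'E A AY' bA.
  have [c [eac cb]] := other_nb cub eab.
  have ZE : [set [set a; b]; [set a; c]] \in edges (lineG e).
    by apply: edgeI; apply: lineG_at => //; rewrite eq_sym.
  apply: (connect_trans (y := [set [set a; b]; [set a; c]])).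
    exact: (Qa _ ZE _ (set21 _ _) (set21 _ _)).
  apply: (L2 esym eirr tf cub ZE Y'E (set21 _ _) AY'); right.
  exact: (meetI (x:=b)) (set22 _ _) bA.
have [R [R' [RR' EY]]] := E_elim YE.
have RE : R \in edges e by case/and4P: RR'.
have [y0 [y1 [ey0 ER]]] := E_elim RE.
have Qy0 : Qz y0 := connect_ind (gc z0 y0) Q0 step.
by apply: (Qy0 Y YE R); rewrite ?EY ?ER set21.
Qed.
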